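(* Let $S$ be a standard skew tableau with $m$ cells and $b$ nonempty rows whose lengths weakly decrease from top to bottom, and let $w_1,\dots,w_b$ be the words of entries of the rows of $S$ read left to right, with $w_1$ the bottom row and $w_b$ the top row. For $1\le j\le b$ and $k\ge1$ put $T_j^{(k)}=P(w_1^{(k)}w_2^{(k)}\cdots w_j^{(k)})$. Then for every $j=2,\dots,b$ and every $k\ge 2b-2$, the tableau $T_j^{(k)}$ has exactly $j$ rows, and - for $i=1,\dots,j-1$, row $i$ of $T_j^{(k)}$ is $x_i\,(w_{j+1-i}+(j-2+i)m)^{(k-j+2-i)}$, - row $j$ of $T_j^{(k)}$ is $x_j\,(w_1+(2j-3)m)^{(k-2j+3)}$, where each $x_i$ is an increasing word with letters in $[(j-2+i)m]$ (the words $x_i$ may have different lengths).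
   Context: $P(w)$ is the Robinson–Schensted row-insertion tableau of $w$; rows are indexed from top to bottom. For a word $y$, $y+m$ adds $m$ to every letter, and $y^{(k)}=y\,(y+m)\,(y+2m)\cdots(y+(k-1)m)$ with $m=|S|$; juxtaposition is concatenation. *)

(* Defs.v *)
From mathcomp Require Import all_boot.
Set Implicit Arguments. Unset Strict Implicit. Unset Printing Implicit Defensive.

(* A tableau is a list of rows, listed from top to bottom; rows are words. *)

Fixpoint bump (x : nat) (r : seq nat) : option (nat * seq nat) :=
  match r with
  | [::] => None
  | y :: r' =>
      if x < y then Some (y, x :: r')
      else match bump x r' with
           | None => None
           | Some (z, r'') => Some (z, y :: r'')
           end
  end.

Fixpoint rs_insert (t : seq (seq nat)) (x : nat) : seq (seq nat) :=
  match t with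
  | [::] => [:: [:: x]]
  | r :: t' =>
      match bump x r with
      | None => rcons r x :: t'
      | Some (y, r') => r' :: rs_insert t' y
      end
  end.

Definition P (w : seq nat) : seq (seq nat) := foldl rs_insert [::] w.

Definition shiftw (y : seq nat) (c : nat) : seq nat := map (addn c) y.

(* y^(k) = y (y+m) (y+2m) ... (y+(k-1)m). *)
Definition kpow (y : seq nat) (m k : nat) : seq nat :=
  flatten [seq shiftw y (i * m) | i <- iota 0 k].

(* A skew tableau with b rows is given by
   mu   : the left offsets of rows (top to bottom), i.e. the inner shape mu,
   rows : the entries of each row read left to right (top to bottom).
   The outer shape is lambda_r = mu_r + size rows_r. *)
Definition in_cell (mu : seq nat) (rows : seq (seq nat)) (r c : nat) : bool :=
  (nth 0 mu r <= c) && (c < nth 0 mu r + size (nth [::] rows r)).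

Definition entry (mu : seq nat) (rows : seq (seq nat)) (r c : nat) : nat :=
  nth 0 (nth [::] rows r) (c - nth 0 mu r).

Definition is_standard_skew_tableau (mu : seq nat) (rows : seq (seq nat)) : Prop :=
  size mu = size rows /\
  [/\
      sorted geq mu,
      sorted geq [seq nth 0 mu r + size (nth [::] rows r) | r <- iota 0 (size rows)],
      perm_eq (flatten rows) (iota 1 (size (flatten rows))),
      all (sorted ltn) rows &
      (forall r c, r.+1 < size rows -> in_cell mu rows r c -> in_cell mu rows r.+1 c ->
        entry mu rows r c < entry mu rows r.+1 c)].

(* Main.v *)
Require Import Defs.
From mathcomp Require Import all_boot zify.
Set Implicit Arguments. Unset Strict Implicit. Unset Printing Implicit Defensive.


Lemma sorted_catP (s1 s2 : seq nat) : sorted ltn s1 -> sorted ltn s2 ->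
  (forall x y, x \in s1 -> y \in s2 -> x < y) -> sorted ltn (s1 ++ s2).
Proof.
move=> h1 h2 h; rewrite sorted_pairwise; last exact: ltn_trans.
rewrite pairwise_cat -!sorted_pairwise ?h1 ?h2 ?andbT; try exact: ltn_trans.
by apply/allrelP => x y; apply: h.
Qed.

Lemma ltn_uniq (s : seq nat) : sorted ltn s -> uniq s.
Proof. by apply: sorted_uniq; [exact: ltn_trans | exact: ltnn]. Qed.

Lemma perm_swap (a b : nat) s : perm_eq (a :: b :: s) (b :: a :: s).
Proof. by rewrite -(cat1s a) -(cat1s b) perm_catCA. Qed.

Lemma bumpP (x : nat) (r : seq nat) : sorted ltn r -> x \notin r ->
  match Defs.bump x r with
  | None => forall z, z \in r -> z < x
  | Some (y, r') => [/\ y \in r, x < y, (forall z, z \in r -> x < z -> y <= z),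
                       perm_eq (x :: r) (y :: r') & sorted ltn r']
  end.
Proof.
elim: r => [|a r IH] //=.
rewrite inE negb_or => hs /andP[hxa hxr].
have hr : sorted ltn r by move: hs; rewrite path_sortedE; [case/andP|exact: ltn_trans].
have hall : all (ltn a) r by move: hs; rewrite path_sortedE; [case/andP|exact: ltn_trans].
case: ltnP => hx.
  split; first by rewrite inE eqxx.
  - done.
  - move=> z; rewrite inE => /orP[/eqP->//|hz] _.
    by apply: ltnW; move/allP: hall; apply.
  - exact: perm_swap.
  - rewrite /= path_sortedE; last exact: ltn_trans.
    rewrite hr andbT; apply/allP => z hz; apply: ltn_trans hx _.
    by move/allP: hall; apply.
have hax : a < x by rewrite ltn_neqAle hx eq_sym hxa.
move: (IH hr hxr); case: (Defs.bump x r) => [[y r']|] /=.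
  case=> hy hxy hmin hp hs'.
  split.
  - by rewrite inE hy orbT.
  - done.
  - move=> z; rewrite inE => /orP[/eqP->|hz] hxz; first by move: (ltn_trans hax hxz); rewrite ltnn.
    by apply: hmin.
  - apply: (perm_trans (perm_swap x a r)); apply: (@perm_trans _ (a :: y :: r')); first by rewrite perm_cons.
    exact: perm_swap.
  - rewrite /= path_sortedE ?hs' ?andbT; last exact: ltn_trans.
    apply/allP => z hz.
    have : z \in x :: r by rewrite (perm_mem hp) inE hz orbT.
    rewrite inE => /orP[/eqP->//|]; by move/allP: hall; apply.
move=> h z; rewrite inE => /orP[/eqP->//|]; exact: h.
Qed.

Definition rowins (r : seq nat) (x : nat) : seq nat * seq nat :=
  match Defs.bump x r with
  | None => (rcons r x, [::])
  | Some (y, r') => (r', [:: y])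
  end.

Fixpoint rowfold (r : seq nat) (W : seq nat) : seq nat * seq nat :=
  match W with
  | [::] => (r, [::])
  | x :: W' => let p := rowins r x in let q := rowfold p.1 W' in (q.1, p.2 ++ q.2)
  end.

Lemma rowfold_cat r V1 V2 : rowfold r (V1 ++ V2) =
  ((rowfold (rowfold r V1).1 V2).1, (rowfold r V1).2 ++ (rowfold (rowfold r V1).1 V2).2).
Proof.
elim: V1 r => [|x V1 IH] r /=; first by case: (rowfold r V2).
by rewrite IH /= catA.
Qed.

Lemma rowfold_rcons r V x : rowfold r (rcons V x) =
  ((rowins (rowfold r V).1 x).1, (rowfold r V).2 ++ (rowins (rowfold r V).1 x).2).
Proof. by rewrite -cats1 rowfold_cat /= cats0. Qed.

Lemma foldl_rs_cons r t W : foldl rs_insert (r :: t) W =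
  (rowfold r W).1 :: foldl rs_insert t (rowfold r W).2.
Proof.
elim: W r t => [|x W IH] r t //=.
rewrite /rowins; case: (Defs.bump x r) => [[y r']|] /=; by rewrite IH.
Qed.

Lemma P_cons W : W != [::] -> P W = (rowfold [::] W).1 :: P (rowfold [::] W).2.
Proof.
case: W => [|x W] //= _; rewrite /P /= foldl_rs_cons //.
Qed.


Definition cnt (s : seq nat) (y z : nat) := count (fun a => (y <= a) && (a < z)) s.
Definition good (R V : seq nat) z := exists2 y, y <= z & cnt R y z < cnt V y z.

Lemma cnt_rcons V x y z : cnt (rcons V x) y z = cnt V y z + ((y <= x) && (x < z)).
Proof. by rewrite /cnt -cats1 count_cat /= addn0. Qed.

Lemma cnt_split s y a b : y <= a -> a <= b -> cnt s y b = cnt s y a + cnt s a b.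
Proof.
move=> h1 h2; rewrite /cnt; elim: s => [|t s IH] //=.
rewrite IH; case: (leqP y t); case: (ltnP t b); case: (ltnP t a); case: (leqP a t); lia.
Qed.

Lemma cnt0 s y z : (forall v, v \in s -> (y <= v) && (v < z) -> False) -> cnt s y z = 0.
Proof.
move=> h; rewrite /cnt; apply/eqP; rewrite -leqn0 leqNgt -has_count.
by apply/hasP => [[v hv hP]]; exact: (h v hv hP).
Qed.

Lemma cnt_pos s y z v : v \in s -> y <= v -> v < z -> 0 < cnt s y z.
Proof. by move=> hv h1 h2; rewrite /cnt -has_count; apply/hasP; exists v => //; rewrite h1. Qed.

Lemma cnt1 s y z zz : uniq s -> zz \in s -> y <= zz -> zz < z ->
  (forall v, v \in s -> y <= v -> v < z -> v = zz) -> cnt s y z = 1.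
Proof.
move=> hu hz h1 h2 h; rewrite /cnt.
rewrite (@eq_in_count _ _ (pred1 zz)) ?count_uniq_mem ?hz //.
move=> v hv /=; apply/idP/idP.
  by case/andP => a b; rewrite (h v hv a b).
by move/eqP->; rewrite h1 h2.
Qed.

Lemma cnt_mono V x y z : cnt V y z <= cnt (rcons V x) y z.
Proof. rewrite cnt_rcons; lia. Qed.

Lemma good_mono R V x z : good R V z -> good R (rcons V x) z.
Proof. case=> y h1 h2; exists y => //; apply: leq_trans h2 (cnt_mono _ _ _ _). Qed.

Lemma sorted_rconsP (V : seq nat) x : sorted ltn (rcons V x) ->
  sorted ltn V /\ (forall v, v \in V -> v < x).
Proof.
rewrite -cats1 sorted_pairwise; last exact: ltn_trans.
rewrite pairwise_cat -sorted_pairwise; last exact: ltn_trans.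
case/and3P => /allrelP ha hv _; split => // v hvv; apply: ha => //; by rewrite inE.
Qed.

Lemma stepInv R V : sorted ltn R -> sorted ltn V -> uniq (R ++ V) ->
  let q := rowfold R V in
  [/\ sorted ltn q.1, perm_eq (q.1 ++ q.2) (R ++ V), {subset q.2 <= R}, sorted ltn q.2 &
      (forall o z, o \in q.2 -> z \in q.1 -> (forall v, v \in V -> v < z) -> o < z) /\
      (forall z, z \in R -> (z \in q.2 <-> good R V z))].
Proof.
move=> hR; elim/last_ind: V => [|V x IH].
  move=> _ _ /=; split => //.
  split => // z _; split => //; case=> y _; by rewrite /cnt /=.
move=> /sorted_rconsP [hV hVx] hu.
have hu' : uniq (R ++ V) by move: hu; rewrite -cats1 catA cat_uniq; case/and3P.
have hxR : x \notin R by move: hu; rewrite -cats1 catA cat_uniq /= orbF mem_cat negb_or; case/and3P => _ /andP[].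
have hxV : x \notin V by move: hu; rewrite -cats1 catA cat_uniq /= orbF mem_cat negb_or; case/and3P => _ /andP[].
case: (IH hV hu') => /=.
rewrite rowfold_rcons /=.
set R1 := (rowfold R V).1; set O := (rowfold R V).2.
move=> i1 i2 i3 i4 [i5 i6].
have memRO z : (z \in R1) || (z \in O) = (z \in R) || (z \in V).
  by rewrite -!mem_cat (perm_mem i2).
have uRO : uniq (R1 ++ O) by rewrite (perm_uniq i2).
have hxR1 : x \notin R1.
  by apply/negP => h; move: (memRO x); rewrite h /= (negbTE hxR) (negbTE hxV).
rewrite /rowins; move: (bumpP i1 hxR1); case: (Defs.bump x R1) => [[y0 r']|] /=.
- case=> hy0 hxy0 hmin hp hs'.
  have uxR1 : uniq (x :: R1) by rewrite /= hxR1 (ltn_uniq i1).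
  have ur' : uniq (y0 :: r') by rewrite -(perm_uniq hp).
  have hy0O : y0 \notin O.
    by apply/negP => h; move: uRO; rewrite cat_uniq => /and3P[_ /hasP []]; exists y0.
  have hy0R : y0 \in R.
    move: (memRO y0); rewrite hy0 /= => /esym /orP[//|hv].
    by move: (ltn_trans (hVx _ hv) hxy0); rewrite ltnn.
  have memr' z : z \in r' -> (z == x) || (z \in R1) && (z != y0).
    move=> hz; have : z \in x :: R1 by rewrite (perm_mem hp) inE hz orbT.
    move: ur' => /= /andP[hny _].
    rewrite inE => /orP[->//|->] /=; apply/orP; right; by apply/eqP => e; move: hny; rewrite -e hz.
  have hVy0 v : v \in V -> v < y0 by move=> hv; exact: ltn_trans (hVx _ hv) hxy0.
  split => //.
  +
    rewrite -cats1.
    apply: (@perm_trans _ (y0 :: r' ++ O)); first by rewrite catA cats1 perm_rcons.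
    apply: (@perm_trans _ (x :: R1 ++ O)).
      by have := hp; rewrite -(perm_cat2r O) perm_sym.
    apply: (@perm_trans _ (x :: R ++ V)); first by rewrite perm_cons.
    by rewrite catA cats1 perm_sym perm_rcons.
  + move=> z; rewrite mem_cat inE => /orP[/i3 //|/eqP->//].
  + apply: sorted_catP => // o z ho; rewrite inE => /eqP->.
    by apply: i5 => //.
  split.
  + move=> o z; rewrite mem_cat inE => ho hz hvz.
    have hxz : x < z by apply: hvz; rewrite mem_rcons inE eqxx.
    move: (memr' z hz); rewrite (gtn_eqF hxz) /= => /andP[hzR1 hzy0].
    have hy0z : y0 < z by rewrite ltn_neqAle eq_sym hzy0 hmin.
    case/orP: ho => [ho|/eqP->//].
    apply: i5 => // v hv; exact: ltn_trans (hVx _ hv) hxz.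
  move=> z hzR; rewrite mem_cat inE; split.
  + case/orP => [hzO|/eqP hz].
      by apply: good_mono; apply/i6.
    rewrite hz {z hz hzR}.
    case: (boolP (has (fun a => (x < a) && (a < y0)) R)) => hh.
    * have exP : exists i, (i \in R) && ((x < i) && (i < y0)).
        by case/hasP: hh => i hi hP; exists i; rewrite hi.
      have ubP : forall i, (i \in R) && ((x < i) && (i < y0)) -> i <= y0.
        by move=> i /and3P[_ _ /ltnW].
      case: (ex_maxnP exP ubP) => zz /and3P[hzzR hxzz hzzy0] hmax.
      have hzzO : zz \in O.
        move: (memRO zz); rewrite hzzR /= => /orP[hzz1|//].
        by move: (hmin _ hzz1 hxzz); rewrite leqNgt hzzy0.
      case/(i6 _ hzzR): hzzO => y hyzz hcnt.
      have hyx : y <= x.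
        rewrite leqNgt; apply/negP => hxy.
        by move: hcnt; rewrite (@cnt0 V) // => v hv /andP[h1 _]; move: (leq_trans h1 (ltnW (hVx _ hv))); rewrite leqNgt hxy.
      exists y; first by apply: leq_trans (ltnW hxy0).
      rewrite cnt_rcons (@cnt_split R y zz y0) ?(ltnW hzzy0) // (@cnt_split V y zz y0) ?(ltnW hzzy0) //.
      rewrite (@cnt0 V zz y0); last by move=> v hv /andP[h1 _]; move: (leq_trans h1 (ltnW (hVx _ hv))); rewrite leqNgt hxzz.
      rewrite (@cnt1 R zz y0 zz) ?(ltn_uniq hR) //; last first.
        move=> v hv h1 h2; apply/eqP; rewrite eqn_leq h1 andbT; apply: hmax.
        by rewrite hv h2 (leq_trans hxzz h1).
      rewrite hyx hxy0 /=; move: hcnt; clear; lia.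
    * exists x; first exact: ltnW.
      rewrite cnt_rcons leqnn hxy0 /= (@cnt0 R) ?addn1 //.
      move=> v hv /andP[h1 h2]; move/hasPn: hh => /(_ v hv) /=; rewrite h2 andbT.
      by rewrite ltn_neqAle h1 andbT; case: eqP => // e; move: hxR; rewrite e hv.
  + case=> y hyz; rewrite cnt_rcons.
    case: (boolP ((y <= x) && (x < z))) => hb; last first.
      by rewrite addn0 => hc; apply/orP; left; apply/i6 => //; exists y.
    case/andP: hb => hyx hxz; rewrite addn1 ltnS => hc.
    case: (boolP (z \in O)) => hzO; first by apply/orP; left.
    have hzR1 : z \in R1 by move: (memRO z); rewrite hzR (negbTE hzO) orbF.
    have hy0z := hmin _ hzR1 hxz.
    case: (ltngtP y0 z) => [hlt|hgt|e]; last by apply/orP; right; apply/eqP.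
      2: by move: hy0z; rewrite leqNgt hgt.
    exfalso.
    have : ~ good R V y0 by move/(i6 _ hy0R); apply/negP.
    apply; exists y; first by apply: leq_trans (ltnW hxy0).
    move: hc; rewrite (@cnt_split R y y0 z) ?(leq_trans hyx (ltnW hxy0)) ?(ltnW hlt) //.
    rewrite (@cnt_split V y y0 z) ?(leq_trans hyx (ltnW hxy0)) ?(ltnW hlt) //.
    rewrite (@cnt0 V y0 z); last by move=> v hv /andP[h1 _]; move: (leq_ltn_trans h1 (hVy0 _ hv)); rewrite ltnn.
    have := cnt_pos hy0R (leqnn y0) hlt; clear; lia.
- move=> hlt.
  rewrite cats0; split => //.
  + rewrite -cats1; apply: sorted_catP => // a b ha; rewrite inE => /eqP->; exact: hlt.
  + by rewrite -!cats1 perm_catAC catA perm_cat2r.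
  split.
  + move=> o z ho; rewrite mem_rcons inE => /orP[/eqP->|hz] hv.
      by move: (hv x); rewrite mem_rcons inE eqxx ltnn => /(_ isT).
    by move: (hv x); rewrite mem_rcons inE eqxx => /(_ isT); rewrite ltnNge (ltnW (hlt _ hz)).
  move=> z hzR; split; first by move/(i6 _ hzR); apply: good_mono.
  case=> y hyz; rewrite cnt_rcons.
  case: (boolP ((y <= x) && (x < z))) => hb; last first.
    by rewrite addn0 => hc; apply/i6 => //; exists y.
  case/andP: hb => hyx hxz _.
  case: (boolP (z \in O)) => [//|hzO].
  have hzR1 : z \in R1 by move: (memRO z); rewrite hzR (negbTE hzO) orbF.
  by move: (hlt _ hzR1); rewrite ltnNge (ltnW hxz).
Qed.


Definition inrng (a : seq nat) m := all (fun x => 0 < x <= m) a.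

Lemma kpowP a m k z : reflect (exists2 t, t < k & exists2 x, x \in a & z = t * m + x)
  (z \in kpow a m k).
Proof.
apply: (iffP flatten_mapP).
  case=> t; rewrite mem_iota add0n => /andP[_ ht] /mapP [x hx ->].
  by exists t => //; exists x.
case=> t ht [x hx ->]; exists t; first by rewrite mem_iota add0n ht.
by apply/mapP; exists x.
Qed.

Lemma res_eq m t x t' x' : 0 < x <= m -> 0 < x' <= m -> t * m + x = t' * m + x' ->
  t = t' /\ x = x'.
Proof.
move=> /andP[h1 h2] /andP[h3 h4] e.
case: (ltngtP t t') => ht.
- have : t.+1 * m <= t' * m by rewrite leq_mul2r ht orbT.
  rewrite mulSn; lia.
- have : t'.+1 * m <= t * m by rewrite leq_mul2r ht orbT.
  rewrite mulSn; lia.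
- by subst; split => //; lia.
Qed.

Lemma kpow_bound a m k z : inrng a m -> z \in kpow a m k -> 0 < z <= k * m.
Proof.
move=> ha /kpowP [t ht [x hx ->]].
move/allP: ha => /(_ x hx) /andP[h1 h2].
have : t.+1 * m <= k * m by rewrite leq_mul2r ht orbT.
rewrite mulSn; lia.
Qed.

Lemma shiftw_sorted a c : sorted ltn a -> sorted ltn (shiftw a c).
Proof.
move=> ha; rewrite /shiftw sorted_map; apply: sub_sorted ha => x y /=.
by rewrite ltn_add2l.
Qed.

Lemma kpowS a m k : kpow a m k.+1 = kpow a m k ++ shiftw a (k * m).
Proof. by rewrite /kpow -addn1 iotaD map_cat flatten_cat /= cats0 add0n. Qed.

Lemma kpow_sorted a m k : sorted ltn a -> inrng a m -> sorted ltn (kpow a m k).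
Proof.
move=> ha hr; elim: k => [|k IH] //.
rewrite kpowS; apply: sorted_catP => //; first exact: shiftw_sorted.
move=> x y hx /mapP [z hz ->].
move: (kpow_bound hr hx) => /andP[_ h]; move/allP: hr => /(_ z hz) /andP[h1 _].
lia.
Qed.

Lemma cnt_eq (P : pred nat) (s1 s2 : seq nat) : uniq s1 -> uniq s2 ->
  (forall a, P a -> (a \in s1) = (a \in s2)) -> count P s1 = count P s2.
Proof.
move=> u1 u2 h; rewrite -!size_filter; apply: perm_size; apply: uniq_perm;
  try exact: filter_uniq.
move=> a; rewrite !mem_filter; case: (boolP (P a)) => //= hP; exact: h.
Qed.

Lemma mod_inj m x x' : 0 < x <= m -> 0 < x' <= m -> x %% m = x' %% m -> x = x'.
Proof.
move=> /andP[h1 h2] /andP[h3 h4].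
case: (ltnP x m) => hx; case: (ltnP x' m) => hx'.
- by rewrite !modn_small.
- have -> : x' = m by lia.
  by rewrite modnn modn_small //; lia.
- have -> : x = m by lia.
  by rewrite modnn modn_small //; lia.
- lia.
Qed.

Lemma cnt_window a m k y : 0 < m -> sorted ltn a -> inrng a m -> 0 < y ->
  y + m <= k * m + 1 -> cnt (kpow a m k) y (y + m) = size a.
Proof.
move=> hm hs hr hy hyk.
rewrite /cnt -size_filter.
set F := filter _ _.
have uF : uniq F by apply: filter_uniq; apply: ltn_uniq; exact: kpow_sorted.
rewrite -(size_map (modn^~ m)) -(size_map (modn^~ m) a).
apply: perm_size; apply: uniq_perm.
- rewrite map_inj_in_uniq // => z z'; rewrite !mem_filter => /andP[/andP[h1 h2] _] /andP[/andP[h3 h4] _] e.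
  case: (leqP z z') => hzz.
    have : m %| z' - z by rewrite -eqn_mod_dvd // e.
    case: (posnP (z' - z)) => d0; first lia.
    by move/(dvdn_leq d0); lia.
  have : m %| z - z' by rewrite -eqn_mod_dvd ?e //; exact: ltnW.
  case: (posnP (z - z')) => d0; first lia.
  by move/(dvdn_leq d0); lia.
- rewrite map_inj_in_uniq; first exact: ltn_uniq.
  move=> x x' hx hx'; apply: mod_inj; [exact: (allP hr) | exact: (allP hr)].
move=> r; apply/mapP/mapP.
  case=> z; rewrite mem_filter => /andP[_ /kpowP [t _ [x hx ->]]] ->.
  by exists x => //; rewrite modnMDl.
case=> x hx ->.
move/allP: hr => /(_ x hx) /andP[hx1 hx2].
set N := y + m - 1 - x.
set t := N %/ m.
have hN := divn_eq N m; have hrem := ltn_pmod N hm.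
have ht : t < k.
  rewrite -(ltn_pmul2r hm); rewrite -/t in hN; lia.
exists (t * m + x); last by rewrite modnMDl.
rewrite mem_filter; apply/andP; split; last by apply/kpowP; exists t => //; exists x.
rewrite -/t in hN; apply/andP; split; lia.
Qed.

Definition Tl m k (C u : seq nat) t :=
  forall z, t * m < z -> (z \in C) = (z \in kpow u m k).

Lemma Tl_mono m k C u t t' : t <= t' -> Tl m k C u t -> Tl m k C u t'.
Proof.
move=> htt h z hz; apply: h; apply: leq_ltn_trans hz; by rewrite leq_mul2r htt orbT.
Qed.

Lemma tail_step m k R V u v th : 0 < m -> sorted ltn R -> sorted ltn V -> uniq (R ++ V) ->
  sorted ltn u -> sorted ltn v -> inrng u m -> inrng v m ->
  (forall x, x \in u -> x \notin v) -> size u <= size v ->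
  Tl m k R u th -> Tl m k V v th ->
  Tl m k (rowfold R V).1 v th.+1 /\ Tl m k (rowfold R V).2 u th.+1.
Proof.
move=> hm hR hV hu su sv ru rv huv hsz tR tV.
case: (stepInv hR hV hu) => /=.
set R1 := (rowfold R V).1; set O := (rowfold R V).2.
move=> i1 i2 i3 i4 [_ i6].
have uR : uniq R by apply: ltn_uniq.
have uV : uniq V by apply: ltn_uniq.
have uku : uniq (kpow u m k) by apply: ltn_uniq; exact: kpow_sorted.
have ukv : uniq (kpow v m k) by apply: ltn_uniq; exact: kpow_sorted.
have key z : th.+1 * m < z -> z \in R -> z \in O.
  move=> hz hzR; apply/(i6 _ hzR).
  have hzu : z \in kpow u m k by rewrite -tR // (leq_ltn_trans _ hz) // leq_mul2r leqnSn orbT.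
  have hzb := kpow_bound ru hzu.
  have hmz : th * m + m < z by move: hz; rewrite mulSn addnC.
  set y := z.+1 - m.
  have hyz : y + m = z.+1 by rewrite /y; move: hmz; clear; lia.
  have hcR : cnt R y z = cnt (kpow u m k) y z.
    apply: cnt_eq => // a /andP[h1 _]; apply: tR; move: h1 hmz; rewrite /y; clear; lia.
  have hcV : cnt V y z = cnt (kpow v m k) y z.
    apply: cnt_eq => // a /andP[h1 _]; apply: tV; move: h1 hmz; rewrite /y; clear; lia.
  have hy0 : 0 < y by move: hmz; rewrite /y; clear; lia.
  have hyk : y + m <= k * m + 1 by rewrite hyz; move: hzb; clear; lia.
  have hyz' : y <= z by rewrite /y; move: hm; clear; lia.
  have wu := @cnt_window u m k y hm su ru hy0 hyk.
  have wv := @cnt_window v m k y hm sv rv hy0 hyk.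
  rewrite hyz (@cnt_split (kpow u m k) y z z.+1) ?leqnSn // in wu.
  rewrite hyz (@cnt_split (kpow v m k) y z z.+1) ?leqnSn // in wv.
  have c1 : cnt (kpow u m k) z z.+1 = 1.
    by apply: (cnt1 uku hzu) => // w _ h1 h2; move: h1 h2; clear; lia.
  have c0 : cnt (kpow v m k) z z.+1 = 0.
    apply: cnt0 => w hw /andP[h1 h2]; have ew : w = z by move: h1 h2; clear; lia.
    move: hzu hw; rewrite ew => /kpowP [t _ [x hx ->]] /kpowP [t' _ [x' hx' e]].
    case: (res_eq (allP ru _ hx) (allP rv _ hx') e) => _ exx.
    by move: (huv _ hx); rewrite exx hx'.
  exists y => //.
  rewrite hcR hcV; move: wu wv hsz; rewrite c1 c0; clear; lia.
have memRO z : (z \in R1) || (z \in O) = (z \in R) || (z \in V).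
  by rewrite -!mem_cat (perm_mem i2).
have uRO : uniq (R1 ++ O) by rewrite (perm_uniq i2).
have disRO z : z \in R1 -> z \in O -> False.
  by move=> h1 h2; move: uRO; rewrite cat_uniq => /and3P[_ /hasP []]; exists z.
have disRV z : z \in R -> z \in V -> False.
  by move=> h1 h2; move: hu; rewrite cat_uniq => /and3P[_ /hasP []]; exists z.
have hth : th * m <= th.+1 * m by rewrite leq_mul2r leqnSn orbT.
split => z hz.
- apply/idP/idP => h.
  + have : (z \in R) || (z \in V) by rewrite -memRO h.
    case/orP => hh; last by rewrite -tV // (leq_ltn_trans hth hz).
    by case: (disRO _ h (key _ hz hh)).
  + have hzV : z \in V by rewrite tV // (leq_ltn_trans hth hz).
    have : (z \in R1) || (z \in O) by rewrite memRO hzV orbT.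
    case/orP => // hO; by case: (disRV _ (i3 _ hO) hzV).
- apply/idP/idP => h.
  + by rewrite -tR ?(i3 _ h) // (leq_ltn_trans hth hz).
  + apply: key => //; by rewrite tR // (leq_ltn_trans hth hz).
Qed.


Definition goodus m (us : seq (seq nat)) : Prop :=
  [/\ forall p, p < size us -> [/\ sorted ltn (nth [::] us p), inrng (nth [::] us p) m &
                                    0 < size (nth [::] us p)],
      forall p q x, p < size us -> q < size us -> p != q -> x \in nth [::] us p ->
                    x \notin nth [::] us q &
      forall p, p.+1 < size us -> size (nth [::] us p) <= size (nth [::] us p.+1)].

Lemma uniq_prefix (Cs : seq (seq nat)) q : uniq (flatten Cs) -> uniq (flatten (take q Cs)).
Proof.
by rewrite -{1}(cat_take_drop q Cs) flatten_cat cat_uniq => /andP[].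
Qed.

Lemma rowL_aux m k us Cs sg : 0 < m -> goodus m us -> size Cs = size us ->
  (forall p, p < size Cs -> sorted ltn (nth [::] Cs p)) -> uniq (flatten Cs) ->
  Tl m k (nth [::] Cs 0) (nth [::] us 0) sg.-1 ->
  (forall p, 0 < p < size Cs -> Tl m k (nth [::] Cs p) (nth [::] us p) (sg + p).-1) ->
  forall q, 0 < q -> q <= size Cs ->
  let Q := rowfold [::] (flatten (take q Cs)) in
  [/\ sorted ltn Q.1, perm_eq (Q.1 ++ Q.2) (flatten (take q Cs)),
    exists Os, [/\ size Os = q.-1, Q.2 = flatten Os,
       forall p, p < size Os -> sorted ltn (nth [::] Os p) &
       forall p, p < size Os -> Tl m k (nth [::] Os p) (nth [::] us p) (sg + p).+1]
   & Tl m k Q.1 (nth [::] us q.-1) (if q == 1 then sg.-1 else (sg + q).-1)].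
Proof.
move=> hm [gu gd gs] hsz hCs hu t0 tp.
elim=> [//|q IH] _ hq.
have hqn : q < size Cs by [].
rewrite (take_nth [::] hqn) flatten_rcons rowfold_cat.
case: q IH hq hqn => [|q] IH hq hqn.
- rewrite take0 /=.
  have hC0 := hCs 0 hqn.
  case: (@stepInv [::] (nth [::] Cs 0) isT hC0 ltac:(exact: ltn_uniq)) => /= i1 i2 i3 i4 _.
  have eO : (rowfold [::] (nth [::] Cs 0)).2 = [::].
    case: (rowfold [::] (nth [::] Cs 0)).2 i3 => // a l /(_ a); rewrite inE eqxx => /(_ isT).
    by rewrite in_nil.
  move: i2; rewrite eO !cats0 => i2.
  split => //.
  + by exists [::].
  + move=> z hz; rewrite (perm_mem i2); exact: t0.
- case: (IH isT (ltnW hqn)) => /=.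
  set R := (rowfold [::] (flatten (take q.+1 Cs))).1.
  set O := (rowfold [::] (flatten (take q.+1 Cs))).2.
  move=> i1 i2 [Os [hOs eO sOs tOs]] tR.
  set C := nth [::] Cs q.+1.
  have hCsrt : sorted ltn C by apply: hCs.
  have hu2 : uniq (flatten (take q.+1 Cs) ++ C).
    by move: (uniq_prefix q.+2 hu); rewrite (take_nth [::] hqn) flatten_rcons.
  have huRC : uniq (R ++ C).
    rewrite cat_uniq (ltn_uniq i1) (ltn_uniq hCsrt) andbT /=.
    apply/hasP => [[x hxC hxR]]; move: hu2; rewrite cat_uniq => /and3P[_ /hasPn hn _].
    by move: (hn x hxC); rewrite /= -(perm_mem i2) mem_cat hxR.
  have hsq : size us = size Cs by [].
  have [su ru nu] := gu q (ltnW (leq_trans hqn (eq_leq hsz))).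
  have [sv rv nv] := gu q.+1 (leq_trans hqn (eq_leq hsz)).
  have huv : forall x, x \in nth [::] us q -> x \notin nth [::] us q.+1.
    move=> x; apply: gd; rewrite -?hsz //; [exact: ltnW | by rewrite neq_ltn ltnSn].
  have hsuv := gs q (leq_trans hqn (eq_leq hsz)).
  have tR' : Tl m k R (nth [::] us q) (sg + q.+1).-1.
    apply: Tl_mono tR; case: ifP => _ ; clear; lia.
  have tC : Tl m k C (nth [::] us q.+1) (sg + q.+1).-1 by apply: tp; rewrite hqn.
  case: (tail_step hm i1 hCsrt huRC su sv ru rv huv hsuv tR' tC) => tR2 tB.
  case: (stepInv i1 hCsrt huRC) => /= j1 j2 j3 j4 _.
  set R2 := (rowfold R C).1 in tR2 j1 j2 *; set B := (rowfold R C).2 in tB j2 j4 *.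
  split => //.
  + apply: (@perm_trans _ ((R2 ++ B) ++ O)); first by rewrite catA perm_catAC.
    apply: (@perm_trans _ ((R ++ C) ++ O)); first by rewrite perm_cat2r.
    apply: (@perm_trans _ ((R ++ O) ++ C)); first by rewrite perm_catAC.
    by rewrite perm_cat2r.
  + exists (rcons Os B); split.
    * by rewrite size_rcons hOs.
    * by rewrite eO flatten_rcons.
    * move=> p; rewrite size_rcons ltnS nth_rcons; case: ltngtP => // hp _; first by apply: sOs.
    * move=> p; rewrite size_rcons ltnS nth_rcons; case: ltngtP => // hp _.
        by apply: tOs.
      rewrite hp hOs /=; apply: Tl_mono tB; clear; lia.
  + apply: Tl_mono tR2 => /=; clear; lia.
Qed.


Definition thr sg n p := if n - p == 1 then (sg + 2 * p).-1 else (sg + n + p).-1.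

Lemma thrS sg n p : thr (sg + 2) n p = thr sg n.+1 p.+1.
Proof. rewrite /thr subSS; case: ifP => _; lia. Qed.

Lemma mem_nth_flatten (Cs : seq (seq nat)) p x : p < size Cs -> x \in nth [::] Cs p ->
  x \in flatten Cs.
Proof. by move=> hp hx; apply/flattenP; exists (nth [::] Cs p) => //; exact: mem_nth. Qed.

Lemma kpow_nil m k : kpow [::] m k = [::].
Proof. by rewrite /kpow /shiftw; elim: (iota 0 k). Qed.

Lemma goodus_take m us n : goodus m us -> goodus m (take n us).
Proof.
case=> g1 g2 g3; rewrite /goodus size_take.
have hlt p : p < (if n < size us then n else size us) -> p < n /\ p < size us.
  by case: ifP => h hp; split => //; clear -h hp; lia.
split.
- move=> p /hlt [h1 h2]; rewrite nth_take //; exact: g1.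
- move=> p q x /hlt [h1 h2] /hlt [h3 h4]; rewrite !nth_take //; exact: g2.
- move=> p /hlt [h1 h2]; rewrite !nth_take //; [apply: g3 => // | clear -h1; lia].
Qed.

Lemma mrl m k : 0 < m -> 0 < k -> forall n sg us Cs,
  size us = n -> size Cs = n -> goodus m us ->
  (forall p, p < n -> sorted ltn (nth [::] Cs p)) -> uniq (flatten Cs) ->
  all (fun z => 0 < z) (flatten Cs) -> sg + 2 * n <= k + 2 ->
  Tl m k (nth [::] Cs 0) (nth [::] us 0) sg.-1 ->
  (forall p, 0 < p < n -> Tl m k (nth [::] Cs p) (nth [::] us p) (sg + p).-1) ->
  size (P (flatten Cs)) = n /\
  forall p, p < n -> [/\ sorted ltn (nth [::] (P (flatten Cs)) p),
                         all (fun z => 0 < z) (nth [::] (P (flatten Cs)) p) &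
                         Tl m k (nth [::] (P (flatten Cs)) p) (nth [::] us (n - p - 1)) (thr sg n p)].
Proof.
move=> hm hk0; elim=> [|n IH] sg us Cs hus hCs gu sC uC pC hk t0 tp.
  by rewrite (size0nil hCs).
have gu' := gu; case: gu' => g1 _ _.
have [su ru nu] := g1 0 ltac:(by rewrite hus).
set u0 := nth [::] us 0 in su ru nu t0.
have hx0 : nth 0 u0 0 \in u0 by apply: mem_nth.
have /andP[hx1 hx2] := allP ru _ hx0.
have hz : sg.-1 * m + nth 0 u0 0 \in nth [::] Cs 0.
  rewrite t0; last by move: hx1; clear; lia.
  apply/kpowP; exists sg.-1; last by exists (nth 0 u0 0).
  by move: hk hk0; clear; lia.
have hne : flatten Cs != [::].
  apply/eqP => e; have := mem_nth_flatten (p := 0) (Cs := Cs) ltac:(by rewrite hCs) hz.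
  by rewrite e.
rewrite P_cons //.
case: (@rowL_aux m k us Cs sg hm gu ltac:(by rewrite hus hCs) ltac:(by move=> p; rewrite hCs; apply: sC) uC t0
  ltac:(by move=> p; rewrite hCs; apply: tp) (size Cs) ltac:(by rewrite hCs) (leqnn _)).
rewrite take_size.
set R := (rowfold [::] (flatten Cs)).1; set O := (rowfold [::] (flatten Cs)).2.
move=> i1 i2 [Os [hOs eO sOs tOs]] tR.
rewrite hCs /= in hOs.
have memO x : x \in O -> x \in flatten Cs by move=> hx; rewrite -(perm_mem i2) mem_cat hx orbT.
have memR x : x \in R -> x \in flatten Cs by move=> hx; rewrite -(perm_mem i2) mem_cat hx.
have uO : uniq (flatten Os).
  by rewrite -eO; move: uC; rewrite -(perm_uniq i2) cat_uniq => /and3P[].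
have pO : all (fun z => 0 < z) (flatten Os).
  by rewrite -eO; apply/allP => x /memO hx; exact: (allP pC).
have hus' : size (take n us) = n by rewrite size_take hus ltnSn.
case: (IH (sg + 2) (take n us) Os hus' hOs (goodus_take n gu)
   ltac:(by move=> p hp; apply: sOs; rewrite hOs) uO pO ltac:(by move: hk; clear; lia)).
- case: (posnP n) => hn.
    move: hOs; rewrite hn => /size0nil ->; rewrite take0 /=.
    by move=> z _; rewrite kpow_nil.
  rewrite nth_take //; apply: Tl_mono (tOs 0 ltac:(by rewrite hOs)); clear; lia.
- move=> p /andP[hp1 hp2]; rewrite nth_take //.
  apply: Tl_mono (tOs p ltac:(by rewrite hOs)); clear; lia.
move=> hsize hrows; rewrite eO; split; first by rewrite /= hsize.
case=> [|p] hp /=.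
- split => //; first by apply/allP => x /memR hx; exact: (allP pC).
  rewrite subn0 subn1 /=.
  move: tR; rewrite hCs /thr subn0 /=; apply: Tl_mono; case: ifP => _; clear; lia.
- have hp' : p < n by [].
  case: (hrows p hp') => r1 r2 r3; split => //.
  have e : nth [::] (take n us) (n - p - 1) = nth [::] us (n - p - 1).
    by rewrite nth_take //; clear -hp'; lia.
  by rewrite -thrS subSS -e.
Qed.


Lemma sorted_split (s : seq nat) c : sorted ltn s ->
  s = filter (fun a => a <= c) s ++ filter (fun a => c < a) s.
Proof.
elim: s => [|x s IH] //= hs.
have [hall hs'] : all (ltn x) s /\ sorted ltn s.
  by move: hs; rewrite path_sortedE; [case/andP | exact: ltn_trans].
case: (leqP x c) => hx /=.
  by rewrite -IH.
rewrite (@eq_in_filter _ _ pred0); last first.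
  move=> a ha /=; apply/negbTE; rewrite -ltnNge; exact: ltn_trans hx (allP hall _ ha).
rewrite filter_pred0 /=; congr (_ :: _); apply/esym/all_filterP.
by apply/allP => a ha; exact: ltn_trans hx (allP hall _ ha).
Qed.

Lemma kpow_shift u c m k : kpow (shiftw u c) m k = shiftw (kpow u m k) c.
Proof.
rewrite /kpow /shiftw map_flatten -map_comp; congr flatten; apply: eq_map => i /=.
rewrite -!map_comp; apply: eq_map => x /=; lia.
Qed.

Lemma split_row m k (row u : seq nat) th : 0 < m -> sorted ltn row -> sorted ltn u ->
  inrng u m -> th <= k -> Tl m k row u th -> all (fun z => 0 < z) row ->
  exists x, [/\ sorted ltn x, all (fun a => 0 < a <= th * m) x &
                row = x ++ kpow (shiftw u (th * m)) m (k - th)].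
Proof.
move=> hm hr hu ru hth tr pr.
exists (filter (fun a => a <= th * m) row); split.
- by apply: sorted_filter => //; exact: ltn_trans.
- apply/allP => a; rewrite mem_filter => /andP[h1 h2]; by rewrite h1 (allP pr _ h2).
rewrite {1}(sorted_split (th * m) hr); congr (_ ++ _).
apply: (irr_sorted_eq ltn_trans ltnn).
- by apply: sorted_filter => //; exact: ltn_trans.
- by rewrite kpow_shift; apply: shiftw_sorted; exact: kpow_sorted.
move=> z; rewrite mem_filter; apply/andP/kpowP.
- case=> hz; rewrite (tr _ hz) => /kpowP [t ht [a ha ez]].
  have /andP[a1 a2] := allP ru _ ha.
  have htt : th <= t.
    rewrite leqNgt; apply/negP => h.
    have : t.+1 * m <= th * m by rewrite leq_mul2r h orbT.
    rewrite mulSn; move: ez hz a2; clear; lia.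
  have e1 : (t - th) * m = t * m - th * m by rewrite mulnBl.
  have e2 : th * m <= t * m by rewrite leq_mul2r htt orbT.
  exists (t - th); first by move: ht htt; clear; lia.
  exists (th * m + a); first by apply/mapP; exists a.
  by rewrite e1; move: ez e2; clear; lia.
- case=> t ht [a' /mapP [a ha ->] ->].
  have /andP[a1 a2] := allP ru _ ha.
  have hz : th * m < t * m + (th * m + a) by move: a1; clear; lia.
  split => //; rewrite (tr _ hz).
  apply/kpowP; exists (t + th); first by move: ht hth; clear; lia.
  by exists a => //; rewrite mulnDl; clear; lia.
Qed.

Lemma uniq_flatten_disj (Cs : seq (seq nat)) p q x : uniq (flatten Cs) ->
  p < size Cs -> q < size Cs -> p != q -> x \in nth [::] Cs p -> x \notin nth [::] Cs q.
Proof.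
elim: Cs p q => [|C Cs IH] p q //=; rewrite cat_uniq => /and3P[uC hn uCs].
case: p => [|p]; case: q => [|q] //= hp hq hpq hx.
- apply/negP => hy; move/hasPn: hn => /(_ x); rewrite /= (mem_nth_flatten hq hy) => /(_ isT).
  by rewrite hx.
- apply/negP => hy; move/hasPn: hn => /(_ x); rewrite /= (mem_nth_flatten hp hx) => /(_ isT).
  by rewrite hy.
- exact: (IH p q uCs hp hq hpq hx).
Qed.

Lemma uniq_flatten_pw (Cs : seq (seq nat)) :
  (forall p, p < size Cs -> uniq (nth [::] Cs p)) ->
  (forall p q x, p < size Cs -> q < size Cs -> p != q -> x \in nth [::] Cs p -> x \notin nth [::] Cs q) ->
  uniq (flatten Cs).
Proof.
elim: Cs => [|C Cs IH] //= hu hd.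
rewrite cat_uniq (hu 0 isT) /=; apply/andP; split.
- apply/hasPn => x /flattenP [D hD hxD]; apply/negP => hxC.
  move: hD => /(nthP [::]) [q hq eq]; subst D.
  by move: (hd 0 q.+1 x isT hq isT hxC); rewrite /= hxD.
- apply: IH => [p hp|p q x hp hq hpq]; first exact: (hu p.+1).
  exact: (hd p.+1 q.+1).
Qed.


Theorem mainTheorem9 (mu : seq nat) (rows : seq (seq nat)) :
  is_standard_skew_tableau mu rows ->
  all (fun r => 0 < size r) rows ->
  sorted geq [seq size r | r <- rows] ->
  let b := size rows in
  let m := size (flatten rows) in
  let w := fun i => nth [::] rows (b - i) in
  forall j k, 2 <= j <= b -> 2 * b - 2 <= k ->
  let T := P (flatten [seq kpow (w i) m k | i <- iota 1 j]) in
  size T = j /\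
  (forall i, 1 <= i <= j - 1 ->
     exists x : seq nat,
       [/\ sorted ltn x, all (fun a => 0 < a <= (j - 2 + i) * m) x &
           nth [::] T (i - 1) =
             x ++ kpow (shiftw (w (j + 1 - i)) ((j - 2 + i) * m)) m (k + 2 - j - i)]) /\
  (exists x : seq nat,
     [/\ sorted ltn x, all (fun a => 0 < a <= (j - 2 + j) * m) x &
         nth [::] T (j - 1) =
           x ++ kpow (shiftw (w 1) ((2 * j - 3) * m)) m (k + 3 - 2 * j)]).
Proof.
move=> hS hne hsz b m w j k /andP[hj1 hj2] hk T.
have eT : T = P (flatten [seq kpow (w i) m k | i <- iota 1 j]) by [].
have ew i : w i = nth [::] rows (b - i) by [].
have em : m = size (flatten rows) by [].
have eb : b = size rows by [].
clearbody T w m b.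
case: hS => hsmu [hmu hlam hperm hrs hcol].
have hb : 0 < b by move: hj1 hj2; clear; lia.
have uR : uniq (flatten rows) by rewrite (perm_uniq hperm) iota_uniq.
have hin x i : i < b -> x \in nth [::] rows i -> 0 < x <= m.
  move=> hi hx; rewrite eb in hi; have := mem_nth_flatten hi hx; rewrite (perm_mem hperm) mem_iota.
  by rewrite -em; clear; lia.
have hrow i : i < b -> [/\ sorted ltn (nth [::] rows i), inrng (nth [::] rows i) m &
                        0 < size (nth [::] rows i)].
  move=> hi; split.
  - by apply: (allP hrs); apply: mem_nth; rewrite -eb.
  - by apply/allP => x hx; apply: hin hx.
  - by apply: (allP hne); apply: mem_nth; rewrite -eb.
have hm : 0 < m.
  have [_ _ h0] := hrow 0 hb.
  have := hin (nth 0 (nth [::] rows 0) 0) 0 hb (mem_nth _ h0); clear; lia.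
set us := [seq w i | i <- iota 1 j].
have husz : size us = j by rewrite size_map size_iota.
have husn p : p < j -> nth [::] us p = nth [::] rows (b - p.+1).
  by move=> hp; rewrite (nth_map 0) ?size_iota // nth_iota // ew add1n.
set Cs := [seq kpow (w i) m k | i <- iota 1 j].
have hCsz : size Cs = j by rewrite size_map size_iota.
have hCsn p : p < j -> nth [::] Cs p = kpow (nth [::] us p) m k.
  by move=> hp; rewrite (nth_map 0) ?size_iota // husn // nth_iota // ew add1n.
have gu : goodus m us.
  split; rewrite husz.
  - move=> p hp; rewrite husn //; apply: hrow; move: hp hj2 hb; clear; lia.
  - move=> p q x hp hq hpq; rewrite !husn //; apply: uniq_flatten_disj => //;
      rewrite -?eb; move: hp hq hpq hj2 hb; clear; lia.
  - move=> p hp; rewrite !husn //; try (move: hp; clear; lia).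
    have gtr : transitive geq by move=> a c d h1 h2; exact: leq_trans h2 h1.
    have H := sorted_ltn_nth gtr 0 hsz.
    have := H (b - p.+2) (b - p.+1).
    rewrite !inE size_map -eb !(nth_map [::]) -?eb; try (move: hp hj2 hb; clear; lia).
have [g1 g2 g3] := gu.
have sC p : p < j -> sorted ltn (nth [::] Cs p).
  move=> hp; rewrite hCsn //; have [h1 h2 _] := g1 p ltac:(by rewrite husz).
  exact: kpow_sorted.
have uC : uniq (flatten Cs).
  apply: uniq_flatten_pw; rewrite hCsz.
    by move=> p hp; apply: ltn_uniq; apply: sC.
  move=> p q x hp hq hpq; rewrite !hCsn //.
  have [_ rp _] := g1 p ltac:(by rewrite husz).
  have [_ rq _] := g1 q ltac:(by rewrite husz).
  move=> /kpowP [t _ [a ha ->]]; apply/negP => /kpowP [t' _ [a' ha' e]].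
  have [_ eaa] := res_eq (allP rp _ ha) (allP rq _ ha') e.
  by move: (g2 p q a ltac:(by rewrite husz) ltac:(by rewrite husz) hpq ha); rewrite eaa ha'.
have pC : all (fun z => 0 < z) (flatten Cs).
  apply/allP => x /flattenP [D /(nthP [::]) [p hp <-]]; rewrite hCsz in hp.
  rewrite hCsn // => hx; have [_ rp _] := g1 p ltac:(by rewrite husz).
  by case/andP: (kpow_bound rp hx).
have hk0 : 0 < k by move: hk hj1 hj2; clear; lia.
have tC p : Tl m k (nth [::] Cs p) (nth [::] us p) p.-1.
  case: (ltnP p j) => hp; first by move=> z _; rewrite hCsn.
  rewrite !nth_default ?husz ?hCsz //; move=> z _; by rewrite kpow_nil.
case: (@mrl m k hm hk0 j 0 us Cs husz hCsz gu sC uC pC ltac:(move: hk hj2; clear; lia)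
   (tC 0) ltac:(by move=> p _; apply: Tl_mono (tC p); clear; lia)) => hsize hrows.
rewrite eT -/Cs; split => //; split.
- move=> i /andP[hi1 hi2].
  have hp : i - 1 < j by move: hi1 hi2; clear; lia.
  case: (hrows _ hp) => r1 r2 r3.
  have eu : nth [::] us (j - (i - 1) - 1) = w (j + 1 - i).
    rewrite husn; last by move: hi1 hi2; clear; lia.
    by rewrite ew; congr nth; move: hi1 hi2; clear; lia.
  have et : thr 0 j (i - 1) = j - 2 + i.
    rewrite /thr; case: ifP => h; first by move/eqP: h; move: hi1 hi2; clear; lia.
    by move: hi1 hi2; clear; lia.
  rewrite eu et in r3.
  have [hu1 hu2 _] := g1 (j - i) ltac:(rewrite husz; move: hi1 hi2; clear; lia).
  rewrite husn in hu1 hu2; last by move: hi1 hi2; clear; lia.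
  have ew' : nth [::] rows (b - (j - i).+1) = w (j + 1 - i).
    by rewrite ew; congr nth; move: hi1 hi2; clear; lia.
  rewrite ew' in hu1 hu2.
  have := @split_row m k _ _ (j - 2 + i) hm r1 hu1 hu2 ltac:(move: hi1 hi2 hk hj2; clear; lia) r3 r2.
  have -> : k - (j - 2 + i) = k + 2 - j - i by move: hi1 hi2 hk hj2 hj1; clear; lia.
  by [].
- have hp : j - 1 < j by move: hj1; clear; lia.
  case: (hrows _ hp) => r1 r2 r3.
  have eu : nth [::] us (j - (j - 1) - 1) = w 1.
    rewrite husn; last by move: hj1; clear; lia.
    by rewrite ew; congr nth; move: hj1; clear; lia.
  have et : thr 0 j (j - 1) = 2 * j - 3.
    rewrite /thr; case: ifP => h; first by move: hj1; clear; lia.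
    by move/negbT: h; move: hj1; clear; lia.
  rewrite eu et in r3.
  have [hu1 hu2 _] := g1 0 ltac:(rewrite husz; move: hj1; clear; lia).
  rewrite husn in hu1 hu2; last by move: hj1; clear; lia.
  have ew1 : nth [::] rows (b - 1) = w 1 by rewrite ew.
  rewrite ew1 in hu1 hu2.
  case: (@split_row m k _ _ (2 * j - 3) hm r1 hu1 hu2 ltac:(move: hk hj2 hj1; clear; lia) r3 r2) => x [x1 x2 x3].
  exists x; split => //.
    apply/allP => a ha; have /andP[a1 a2] := allP x2 a ha; rewrite a1 /=.
    apply: (leq_trans a2); rewrite leq_mul2r; apply/orP; right; move: hj1; clear; lia.
  rewrite x3; congr (_ ++ kpow _ m _); move: hj1 hk hj2; clear; lia.
Qed.
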